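(* Let $0<r\le1<R$ and define $f(t)=t^2$ for $|t|\le1$, $f(t)=|t|^r$ for $1<|t|\le R$, and $f(t)=\infty$ for $|t|>R$. Then for any $p\ge1$ and any $a_1\ge a_2\ge\dots\ge a_n\ge0$, the quantity $S=\sup\{\sum_ia_it_i:\sum_if(t_i)\le p\}$ satisfies, up to universal multiplicative constants, $$S\sim\begin{cases}\sqrt p\sqrt{\sum_ia_i^2}+p^{1/r}a_1 & 1\le p\le R^r,\\ \sqrt p\sqrt{\sum_ia_i^2}+R\sum_{i\le p/R^r}a_i & R^r<p\le R^2,\\ \sqrt p\sqrt{\sum_{i\ge p/R^2}a_i^2}+R\sum_{i\le p/R^r}a_i & R^2<p.\end{cases}$$
   Context: $A\sim B$ means $B/C\le A\le CB$ for a universal constant $C$. *)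

(* Defs.v *)
From HB Require Import structures.
From mathcomp Require Import all_boot all_order all_algebra.
From mathcomp Require Import all_classical all_reals all_analysis.
Set Implicit Arguments. Unset Strict Implicit. Unset Printing Implicit Defensive.
Import Order.TTheory GRing.Theory Num.Theory.
Local Open Scope ring_scope.
Local Open Scope classical_set_scope.

Definition fA4 {K : realType} (r R : K) (t : K) : \bar K :=
  if `|t| <= 1 then (t ^+ 2)%:E
  else if `|t| <= R then (`|t| `^ r)%:E
  else +oo%E.

Definition SA4 {K : realType} (n : nat) (r R p : K) (a : 'I_n -> K) : K :=
  sup [set x : K | exists t : 'I_n -> K,
         (\sum_(i < n) fA4 r R (t i) <= p%:E)%E /\ x = \sum_(i < n) a i * t i].

(* The piecewise two-sided bound; indices are 1-based in the paper,
   so the paper's index i corresponds to the ordinal i-1 here. *)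
Definition BA4 {K : realType} (n : nat) (r R p : K) (a : 'I_n -> K) : K :=
  if p <= R `^ r then
    Num.sqrt p * Num.sqrt (\sum_(i < n) a i ^+ 2) + p `^ r^-1 * (\sum_(i < n | val i == 0%N) a i)
  else if p <= R ^+ 2 then
    Num.sqrt p * Num.sqrt (\sum_(i < n) a i ^+ 2)
      + R * \sum_(i < n | (i.+1)%:R <= p / R `^ r) a i
  else
    Num.sqrt p * Num.sqrt (\sum_(i < n | p / R ^+ 2 <= (i.+1)%:R) a i ^+ 2)
      + R * \sum_(i < n | (i.+1)%:R <= p / R `^ r) a i.

(* Main.v *)
Require Import Defs.
From HB Require Import structures.
From mathcomp Require Import all_boot all_order all_algebra.
From mathcomp Require Import all_classical all_reals all_analysis.
From mathcomp Require Import ring lra.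
Import Order.TTheory GRing.Theory Num.Theory.
Local Open Scope ring_scope.
Set Implicit Arguments. Unset Strict Implicit. Unset Printing Implicit Defensive.
Lemma cnt_le_n (K : realType) (n : nat) (P : pred 'I_n) :
  \sum_(i < n | P i) (1:K) <= n%:R.
Proof.
apply: (@le_trans _ _ (\sum_(i < n) (1:K))).
  rewrite [X in _ <= X](bigID P) /= lerDl; apply: sumr_ge0 => i _; lra.
by rewrite sumr_const card_ord.
Qed.

Lemma count_le (K : realType) (n : nat) (x : K) : 0 <= x ->
  \sum_(i < n | (i.+1)%:R <= x) (1:K) <= x.
Proof.
move=> x0; elim: n => [|n IH]; first by rewrite big_ord0.
rewrite big_mkcond big_ord_recr /= -big_mkcond /=.
case: ifP => H; last by rewrite addr0.
have := @cnt_le_n K n (fun i : 'I_n => (i.+1)%:R <= x).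
rewrite -natr1 in H; lra.
Qed.

Lemma count_ge (K : realType) (n : nat) (x : K) : 1 <= x ->
  n%:R <= \sum_(i < n | (i.+1)%:R <= x) (1:K) \/
  x / 2 <= \sum_(i < n | (i.+1)%:R <= x) (1:K).
Proof.
move=> x1; elim: n => [|n IH]; first by left; rewrite big_ord0.
rewrite big_mkcond big_ord_recr /= -big_mkcond /=.
case: ifP => H.
  rewrite -natr1; case: IH => IH; [left|right]; lra.
rewrite addr0; move/negbT: H; rewrite -ltNge => H.
case: IH => IH; right; last lra.
case: n IH H => [|n] IH H.
  move: H; rewrite /= => H; lra.
rewrite -natr1 in H. have : 0 <= n%:R :> K by []. lra.
Qed.
Lemma cs (K : realType) n (P : pred 'I_n) (u v : 'I_n -> K) :
  \sum_(i < n | P i) u i * v i <=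
  Num.sqrt (\sum_(i < n | P i) u i ^+ 2) * Num.sqrt (\sum_(i < n | P i) v i ^+ 2).
Proof.
set X := \sum_(i < n | P i) u i ^+ 2; set Y := \sum_(i < n | P i) v i ^+ 2.
have X0 : 0 <= X by apply: sumr_ge0 => i _; exact: sqr_ge0.
have Y0 : 0 <= Y by apply: sumr_ge0 => i _; exact: sqr_ge0.
have rhs0 : 0 <= Num.sqrt X * Num.sqrt Y by rewrite mulr_ge0 ?sqrtr_ge0.
have [Xe|Xn] := eqVneq X 0.
  rewrite big1 // => i Pi.
  have := psumr_eq0P (fun i _ => sqr_ge0 (u i)) Xe Pi.
  by move/eqP; rewrite sqrf_eq0 => /eqP ->; rewrite mul0r.
have [Ye|Yn] := eqVneq Y 0.
  rewrite big1 // => i Pi.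
  have := psumr_eq0P (fun i _ => sqr_ge0 (v i)) Ye Pi.
  by move/eqP; rewrite sqrf_eq0 => /eqP ->; rewrite mulr0.
have Xp : 0 < X by rewrite lt_def Xn X0.
have Yp : 0 < Y by rewrite lt_def Yn Y0.
set s := Num.sqrt X; set q := Num.sqrt Y.
have sp : 0 < s by rewrite sqrtr_gt0.
have qp : 0 < q by rewrite sqrtr_gt0.
have s2 : s ^+ 2 = X by rewrite sqr_sqrtr.
have q2 : q ^+ 2 = Y by rewrite sqr_sqrtr.
have c0 : 0 < 2 * s * q by rewrite !mulr_gt0.
rewrite -(ler_pM2r c0) mulr_suml.
apply: (@le_trans _ _ (\sum_(i < n | P i) (q ^+ 2 * u i ^+ 2 + s ^+ 2 * v i ^+ 2))).
  apply: ler_sum => i _.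
  have E : q ^+ 2 * u i ^+ 2 + s ^+ 2 * v i ^+ 2 - u i * v i * (2 * s * q) = (q * u i - s * v i) ^+ 2 by ring.
  by rewrite -subr_ge0 E sqr_ge0.
rewrite big_split /= -!mulr_sumr -/X -/Y -s2 -q2.
rewrite le_eqVlt; apply/orP; left; apply/eqP; ring.
Qed.

Lemma pow_split (K : realType) (r x M : K) : 0 < r -> r <= 1 -> 0 <= x -> x <= M ->
  x <= x `^ r * M `^ (1 - r).
Proof.
move=> r0 r1 x0 xM.
have M0 : 0 <= M by apply: le_trans xM.
have h : x `^ (1 - r) <= M `^ (1 - r).
  apply: ge0_ler_powR => //; rewrite ?nnegrE //; lra.
apply: (@le_trans _ _ (x `^ r * x `^ (1 - r))).
  have [->|xn] := eqVneq x 0; first by rewrite mulr_ge0 ?powR_ge0.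
  by rewrite -powRD ?xn ?implybT // addrC subrK powRr1.
by apply: ler_wpM2l => //; exact: powR_ge0.
Qed.
Lemma greedy (K : realType) n (a s : 'I_n -> K) (c p : K) :
  0 < c -> c <= p -> (forall i, 0 <= a i) ->
  (forall i j : 'I_n, (i <= j)%N -> a j <= a i) ->
  (forall i, 0 <= s i <= c) -> \sum_(i < n) s i <= p ->
  \sum_(i < n) a i * s i <= 3 * c * \sum_(i < n | (i.+1)%:R <= p / c) a i.
Proof.
move=> c0 cp a0 adec s0 sp.
set x := p / c.
have x1 : 1 <= x by rewrite /x ler_pdivlMr // mul1r.
set SH := \sum_(i < n | (i.+1)%:R <= x) a i.
have SH0 : 0 <= SH by apply: sumr_ge0.
set cnt := \sum_(i < n | (i.+1)%:R <= x) (1:K).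
have ai : forall i : 'I_n, ~~ ((i.+1)%:R <= x) -> a i * (x / 2) <= SH.
  move=> i Hi.
  have hc : x / 2 <= cnt.
    case: (@count_ge K n x x1) => // h.
    move: Hi; rewrite -ltNge => Hi.
    have : (i.+1)%:R <= n%:R :> K by rewrite ler_nat ltn_ord.
    rewrite -/cnt in h. lra.
  apply: (@le_trans _ _ (a i * cnt)); first by apply: ler_wpM2l.
  rewrite /cnt mulr_sumr /SH; apply: ler_sum => j Hj; rewrite mulr1; apply: adec.
  have : (j.+1)%:R < (i.+1)%:R :> K by move: Hi; rewrite -ltNge; apply: le_lt_trans.
  by rewrite ltr_nat ltnS => /ltnW.
rewrite (bigID (fun i : 'I_n => (i.+1)%:R <= x)) /=.
have p1 : \sum_(i < n | (i.+1)%:R <= x) a i * s i <= c * SH.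
  rewrite /SH mulr_sumr; apply: ler_sum => i _; rewrite mulrC; apply: ler_wpM2r => //; by case/andP: (s0 i).
have sn : \sum_(i < n | ~~ ((i.+1)%:R <= x)) s i <= p.
  apply: le_trans sp; rewrite [X in _ <= X](bigID (fun i : 'I_n => (i.+1)%:R <= x)) /= lerDr.
  by apply: sumr_ge0 => i _; case/andP: (s0 i).
have xp : 0 < x by lra.
have p2 : \sum_(i < n | ~~ ((i.+1)%:R <= x)) a i * s i <= (2 * SH / x) * p.
  apply: (@le_trans _ _ (\sum_(i < n | ~~ ((i.+1)%:R <= x)) (2 * SH / x) * s i)).
    apply: ler_sum => i Hi; apply: ler_wpM2r; first by case/andP: (s0 i).
    have := ai i Hi; rewrite ler_pdivlMr // => h.
    have : a i * (x / 2) = (a i * x) / 2 by rewrite mulrA.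
    lra.
  rewrite -mulr_sumr; apply: ler_wpM2l => //; rewrite divr_ge0 //; lra.
have E : 2 * SH / x * p = 2 * c * SH.
  rewrite /x; field; apply/andP; split; rewrite ?gt_eqF //; lra.
lra.
Qed.
Definition gA (K : realType) (r t : K) : K := if `|t| <= 1 then t ^+ 2 else `|t| `^ r.

Lemma gA_ge0 (K : realType) (r t : K) : 0 <= gA r t.
Proof. by rewrite /gA; case: ifP => _; rewrite ?sqr_ge0 ?powR_ge0. Qed.

Lemma gA_le_sq (K : realType) (r t : K) : 0 < r -> r <= 1 -> gA r t <= t ^+ 2.
Proof.
move=> r0 r1; rewrite /gA; case: ifP => // /negbT; rewrite -ltNge => h.
rewrite -real_normK ?num_real // -powR_mulrn //.
by apply: ler_powR; [apply: ltW | lra].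
Qed.

Lemma fA4_R (K : realType) (r R t : K) : 1 < R -> `|t| <= R -> fA4 r R t = (gA r t)%:E.
Proof. by move=> R1 tR; rewrite /fA4 /gA; case: ifP => // _; rewrite tR. Qed.

Lemma fA4_big (K : realType) (r R t : K) : 1 < R -> ~~ (`|t| <= R) -> fA4 r R t = +oo%E.
Proof.
move=> R1 tR; rewrite /fA4 (negbTE tR); case: ifP => // h.
by move: tR; rewrite (le_trans h (ltW R1)).
Qed.

Lemma fA4_ge0 (K : realType) (r R t : K) : (0 <= fA4 r R t)%E.
Proof. by rewrite /fA4; case: ifP => _; [|case: ifP => _]; rewrite ?lee_fin ?sqr_ge0 ?powR_ge0. Qed.

Lemma feas_inv (K : realType) n (r R p : K) (t : 'I_n -> K) : 1 < R ->
  (\sum_(i < n) fA4 r R (t i) <= p%:E)%E ->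
  (forall i, `|t i| <= R) /\ \sum_(i < n) gA r (t i) <= p.
Proof.
move=> R1 hs.
have tR : forall i, `|t i| <= R.
  move=> i; apply/negP => /negP h.
  have : (fA4 r R (t i) <= \sum_(j < n) fA4 r R (t j))%E.
    rewrite (bigD1 i) //= leeDl // sume_ge0 // => j _; exact: fA4_ge0.
  rewrite fA4_big // => h2.
  by have := le_trans h2 hs; rewrite leye_eq.
split => //.
by move: hs; rewrite (eq_bigr (fun i => (gA r (t i))%:E)) ?sumEFin ?lee_fin // => i _; rewrite fA4_R.
Qed.

Lemma feas (K : realType) n (r R p : K) (t : 'I_n -> K) : 1 < R ->
  (forall i, `|t i| <= R) -> \sum_(i < n) gA r (t i) <= p ->
  (\sum_(i < n) fA4 r R (t i) <= p%:E)%E.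
Proof.
move=> R1 tR hs.
by rewrite (eq_bigr (fun i => (gA r (t i))%:E)) ?sumEFin ?lee_fin // => i _; rewrite fA4_R.
Qed.

Lemma SA4_ge (K : realType) n (r R p : K) (a t : 'I_n -> K) : 1 < R ->
  (forall i, 0 <= a i) -> (forall i, `|t i| <= R) -> \sum_(i < n) gA r (t i) <= p ->
  \sum_(i < n) a i * t i <= SA4 r R p a.
Proof.
move=> R1 a0 tR hs.
apply: sup_upper_bound; last by exists t; split => //; exact: feas.
split; first by exists (\sum_(i < n) a i * t i), t; split => //; exact: feas.
exists (R * \sum_(i < n) a i) => x [u [hu ->]].
have [uR _] := feas_inv R1 hu.
rewrite mulr_sumr; apply: ler_sum => i _; rewrite mulrC.
apply: ler_wpM2r => //; apply: le_trans (uR i); exact: real_ler_norm (num_real _).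
Qed.

Lemma SA4_le (K : realType) n (r R p y : K) (a : 'I_n -> K) : 1 < R -> 0 <= p ->
  (forall t : 'I_n -> K, (forall i, `|t i| <= R) -> \sum_(i < n) gA r (t i) <= p ->
     \sum_(i < n) a i * t i <= y) ->
  SA4 r R p a <= y.
Proof.
move=> R1 p0 H; apply: ge_sup.
  exists 0, (fun=> 0); split; last by rewrite big1 // => i _; rewrite mulr0.
  apply: feas => //; first by move=> i; rewrite normr0; lra.
  by rewrite big1 // => i _; rewrite /gA normr0 ler01 expr0n.
move=> x [u [hu ->]]; have [uR us] := feas_inv R1 hu; exact: H.
Qed.
Lemma S_ge0 (K : realType) n (r R p : K) (a : 'I_n -> K) : 1 < R -> 0 <= p ->
  (forall i, 0 <= a i) -> 0 <= SA4 r R p a.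
Proof.
move=> R1 p0 a0.
have : \sum_(i < n) a i * (fun=> (0:K)) i <= SA4 r R p a.
  apply: SA4_ge => //; first by move=> i; rewrite normr0; lra.
  by rewrite big1 // => i _; rewrite /gA normr0 ler01 expr0n.
by rewrite big1 // => i _; rewrite mulr0.
Qed.

Lemma lb_sq (K : realType) n (r R p M : K) (a : 'I_n -> K) (P : pred 'I_n) :
  0 < r -> r <= 1 -> 1 < R -> 0 <= p -> 0 <= M -> (forall i, 0 <= a i) ->
  (forall i, P i -> Num.sqrt p * a i <= R * Num.sqrt (\sum_(j < n | P j) a j ^+ 2) \/ a i <= M) ->
  Num.sqrt p * Num.sqrt (\sum_(j < n | P j) a j ^+ 2) <= SA4 r R p a + M * p / R.
Proof.
move=> r0 r1 R1 p0 M0 a0 H.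
set A2 := \sum_(j < n | P j) a j ^+ 2.
have S0 := S_ge0 r R1 p0 a0.
have MpR : 0 <= M * p / R by rewrite divr_ge0 ?mulr_ge0 ?a0 //; lra.
have A20 : 0 <= A2 by apply: sumr_ge0 => i _; exact: sqr_ge0.
have [Ae|An] := eqVneq A2 0.
  rewrite Ae sqrtr0 mulr0; lra.
have Ap : 0 < A2 by rewrite lt_def An A20.
set q := Num.sqrt A2.
have qp : 0 < q by rewrite sqrtr_gt0.
have q2 : q ^+ 2 = A2 by rewrite sqr_sqrtr.
set sp := Num.sqrt p.
have sp0 : 0 <= sp by apply: sqrtr_ge0.
have sp2 : sp ^+ 2 = p by rewrite sqr_sqrtr.
set l := sp / q.
have l0 : 0 <= l by rewrite divr_ge0 // ltW.
pose t' i := if l * a i <= R then l * a i else R.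
pose t i := if P i then t' i else 0.
have t'0 : forall i, 0 <= t' i <= R.
  move=> i; rewrite /t'; case: ifP => h; first by rewrite h (mulr_ge0 l0 (a0 i)).
  apply/andP; split; lra.
have tR : forall i, `|t i| <= R.
  move=> i; rewrite /t; case: (P i); last by rewrite normr0; lra.
  by case/andP: (t'0 i) => h1 h2; rewrite ger0_norm.
have hp : \sum_(i < n | P i) (l * a i) ^+ 2 = p.
  rewrite (eq_bigr (fun i => l ^+ 2 * a i ^+ 2)) => [|i _]; last by rewrite exprMn.
  by rewrite -mulr_sumr /l expr_div_n sp2 q2 -/A2 divfK.
have tg : \sum_(i < n) gA r (t i) <= p.
  rewrite -hp; rewrite [X in _ <= X]big_mkcond; apply: ler_sum => i _; rewrite /t; case: (P i).
    apply: le_trans (gA_le_sq _ r0 r1) _.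
    rewrite /t'; case: ifP => h //; move/negbT: h; rewrite -ltNge => h.
    rewrite !expr2; apply: ler_pM; lra.
  by rewrite /gA normr0 ler01 expr0n.
have hv : \sum_(i < n | P i) a i * t' i <= SA4 r R p a.
  have -> : \sum_(i < n | P i) a i * t' i = \sum_(i < n) a i * t i.
    rewrite big_mkcond; apply: eq_bigr => i _; rewrite /t; by case: (P i); rewrite ?mulr0.
  exact: SA4_ge.
have hi : forall i, P i -> l * a i ^+ 2 <= a i * t' i + M / R * (l * a i) ^+ 2.
  move=> i Pi; rewrite /t'; case: ifP => h.
    have : 0 <= M / R * (l * a i) ^+ 2 by rewrite mulr_ge0 ?divr_ge0 ?sqr_ge0 //; lra.
    have : l * a i ^+ 2 = a i * (l * a i) by ring.
    lra.
  move/negbT: h; rewrite -ltNge => h.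
  have aM : a i <= M.
    case: (H i Pi) => // h2; exfalso.
    have : l * a i <= R by rewrite /l mulrAC ler_pdivrMr.
    lra.
  set y := l * a i in h *.
  have e1 : l * a i ^+ 2 = a i * y by rewrite /y; ring.
  have y0 : 0 <= y by lra.
  have e2a : 0 <= a i * y * (y - R) / R by apply: divr_ge0; [apply: mulr_ge0; [exact: mulr_ge0 | lra] | lra].
  have e2 : a i * y * (y / R) = a i * y + a i * y * (y - R) / R.
    by field; rewrite gt_eqF //; lra.
  have e3 : a i * y * (y / R) <= M * y * (y / R).
    apply: ler_wpM2r; first by rewrite divr_ge0 //; lra.
    exact: ler_wpM2r.
  have e4 : M * y * (y / R) = M / R * y ^+ 2.
    by field; rewrite gt_eqF //; lra.
  have e5 : 0 <= a i * R by rewrite mulr_ge0 ?a0 //; lra.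
  lra.
have hs : \sum_(i < n | P i) l * a i ^+ 2 <= \sum_(i < n | P i) (a i * t' i + M / R * (l * a i) ^+ 2) by apply: ler_sum.
move: hs; rewrite big_split /= -mulr_sumr -mulr_sumr hp -/A2.
have -> : l * A2 = sp * q by rewrite /l -q2; field; rewrite gt_eqF.
have -> : M / R * p = M * p / R by rewrite mulrAC.
lra.
Qed.
Lemma ub_dec (K : realType) n (r R p M : K) (a t : 'I_n -> K) :
  0 < r -> r <= 1 -> 1 < R -> (forall i, 0 <= a i) -> (forall i, `|t i| <= R) ->
  \sum_(i < n) gA r (t i) <= p -> (forall i, 1 < `|t i| -> `|t i| <= M) ->
  exists b s : 'I_n -> K, [/\ forall i, 0 <= b i <= 1, \sum_(i < n) b i ^+ 2 <= p,
    forall i, 0 <= s i <= R `^ r, \sum_(i < n) s i <= p &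
    \sum_(i < n) a i * t i <= \sum_(i < n) a i * b i + M `^ (1 - r) * \sum_(i < n) a i * s i].
Proof.
move=> r0 r1 R1 a0 tR tg tM.
pose b i := if `|t i| <= 1 then `|t i| else 0.
pose s i := if `|t i| <= 1 then 0 else `|t i| `^ r.
exists b, s; split.
- by move=> i; rewrite /b; case: ifP => h; rewrite ?h ?normr_ge0 ?lexx ?ler01.
- apply: le_trans tg; apply: ler_sum => i _; rewrite /b /gA /=; case: ifP => h.
    by rewrite le_eqVlt; apply/orP; left; apply/eqP; exact: real_normK (num_real _).
  by rewrite expr0n powR_ge0.
- move=> i; rewrite /s; case: ifP => h; first by rewrite lexx powR_ge0.
  rewrite powR_ge0 /=; apply: ge0_ler_powR; rewrite ?nnegrE ?normr_ge0 ?tR //; try lra.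
- apply: le_trans tg; apply: ler_sum => i _; rewrite /s /gA /=; case: ifP => h //.
  by rewrite sqr_ge0.
- rewrite mulr_sumr -big_split /=; apply: ler_sum => i _.
  apply: (@le_trans _ _ (a i * `|t i|)).
    by apply: ler_wpM2l => //; exact: real_ler_norm (num_real _).
  rewrite /b /s; case: ifP => h; first by rewrite mulr0 mulr0 addr0.
  move/negbT: h; rewrite -ltNge => h.
  rewrite mulr0 add0r mulrCA; apply: ler_wpM2l => //.
  rewrite mulrC; apply: pow_split; rewrite ?normr_ge0 //; exact: tM.
Qed.
Lemma gA_0 (K : realType) (r : K) : gA r 0 = 0.
Proof. by rewrite /gA normr0 ler01 expr0n. Qed.

Lemma lb_head (K : realType) n (r R p : K) (a : 'I_n -> K) :
  0 < r -> 1 < R -> 0 <= p -> (forall i, 0 <= a i) ->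
  R * \sum_(i < n | (i.+1)%:R <= p / R `^ r) a i <= SA4 r R p a.
Proof.
move=> r0 R1 p0 a0.
set x := p / R `^ r.
have Rr : 0 < R `^ r by apply: powR_gt0; lra.
pose t (i : 'I_n) := if (i.+1)%:R <= x then R else 0.
have -> : R * \sum_(i < n | (i.+1)%:R <= x) a i = \sum_(i < n) a i * t i.
  rewrite mulr_sumr big_mkcond; apply: eq_bigr => i _; rewrite /t; case: ifP => _; by rewrite ?mulr0 // mulrC.
apply: SA4_ge => //.
  move=> i; rewrite /t; case: ifP => _; rewrite ?normr0 ?gtr0_norm //; lra.
have gR : gA r R = R `^ r.
  have h : (R <= 1) = false by apply/negbTE; rewrite -ltNge.
  by rewrite /gA gtr0_norm ?h //; lra.
apply: (@le_trans _ _ (\sum_(i < n | (i.+1)%:R <= x) R `^ r)).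
  rewrite [X in _ <= X]big_mkcond; apply: ler_sum => i _; rewrite /t; case: ifP => _; first by rewrite gR.
  by rewrite gA_0.
have -> : \sum_(i < n | (i.+1)%:R <= x) R `^ r = R `^ r * \sum_(i < n | (i.+1)%:R <= x) 1.
  by rewrite mulr_sumr; apply: eq_bigr => i _; rewrite mulr1.
apply: (@le_trans _ _ (R `^ r * x)).
  apply: ler_wpM2l; [exact: ltW | apply: count_le; apply: divr_ge0 => //; exact: ltW].
by rewrite /x mulrC divfK // gt_eqF.
Qed.

Lemma lb_first (K : realType) n (r R p : K) (a : 'I_n -> K) :
  0 < r -> r <= 1 -> 1 < R -> 1 <= p -> p <= R `^ r -> (forall i, 0 <= a i) ->
  p `^ r^-1 * \sum_(i < n | val i == 0%N) a i <= SA4 r R p a.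
Proof.
move=> r0 r1 R1 p1 pR a0.
set x := p `^ r^-1.
have ri : 1 <= r^-1 by rewrite invf_ge1.
have x1 : p <= x by apply: le1r_powR.
have xR : x <= R.
  have : x <= (R `^ r) `^ r^-1 by apply: ge0_ler_powR; rewrite ?nnegrE ?powR_ge0 //; lra.
  by rewrite -powRrM mulfV ?gt_eqF // powRr1 //; lra.
have gx : gA r x <= p.
  rewrite /gA ger0_norm; last lra.
  case: ifP => h.
    have : x * x <= 1 * 1 by apply: ler_pM; lra.
    rewrite expr2; lra.
  by rewrite /x -powRrM mulVf ?gt_eqF // powRr1 //; lra.
pose t (i : 'I_n) := if val i == 0%N then x else 0.
have -> : x * \sum_(i < n | val i == 0%N) a i = \sum_(i < n) a i * t i.
  rewrite mulr_sumr big_mkcond; apply: eq_bigr => i _; rewrite /t; case: ifP => _; by rewrite ?mulr0 // mulrC.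
apply: SA4_ge => //.
  move=> i; rewrite /t; case: ifP => _; rewrite ?normr0 ?ger0_norm //; lra.
apply: (@le_trans _ _ (\sum_(i < n | val i == 0%N) gA r x)).
  rewrite [X in _ <= X]big_mkcond; apply: ler_sum => i _; rewrite /t; case: ifP => _ //.
  by rewrite gA_0.
have -> : \sum_(i < n | val i == 0%N) gA r x = gA r x * \sum_(i < n | (i.+1)%:R <= (1:K)) 1.
  rewrite mulr_sumr; apply: eq_big => i; first by rewrite lern1 ltnS leqn0.
  by move=> _; rewrite mulr1.
have c1 := @count_le K n 1 ler01.
have g0 : 0 <= gA r x := gA_ge0 r x.
apply: (@le_trans _ _ (gA r x * 1)); last by rewrite mulr1.
exact: ler_wpM2l.
Qed.
Lemma sum_sub (K : realType) n (P Q : pred 'I_n) (F : 'I_n -> K) :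
  (forall i, P i -> Q i) -> (forall i, Q i -> 0 <= F i) ->
  \sum_(i < n | P i) F i <= \sum_(i < n | Q i) F i.
Proof.
move=> PQ F0; rewrite big_mkcond [X in _ <= X]big_mkcond; apply: ler_sum => i _.
case: ifP => Pi; first by rewrite (PQ i Pi) /= lexx.
case: ifP => Qi //; exact: F0.
Qed.

Lemma a_le_sqrt (K : realType) n (P : pred 'I_n) (a : 'I_n -> K) i :
  (forall j, 0 <= a j) -> P i -> a i <= Num.sqrt (\sum_(j < n | P j) a j ^+ 2).
Proof.
move=> a0 Pi; rewrite -{1}(ger0_norm (a0 i)) -sqrtr_sqr; apply: ler_wsqrtr.
rewrite (bigD1 i) //= lerDl; apply: sumr_ge0 => j _; exact: sqr_ge0.
Qed.

Lemma powR_split1 (K : realType) (x e : K) : 0 < x -> x `^ (1 - e) * x `^ e = x.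
Proof.
move=> x0; rewrite -powRD ?subrK ?powRr1 //; first exact: ltW.
by apply/implyP => _; rewrite gt_eqF.
Qed.
Theorem lemmaA4 (K : realType) :
  exists C : K, 0 < C /\
  forall (r R p : K) (n : nat) (a : 'I_n -> K),
    0 < r -> r <= 1 -> 1 < R -> 1 <= p ->
    (forall i : 'I_n, 0 <= a i) ->
    (forall i j : 'I_n, (i <= j)%N -> a j <= a i) ->
    BA4 r R p a / C <= SA4 r R p a /\ SA4 r R p a <= C * BA4 r R p a.
Proof.
exists 4; split; first lra.
move=> r R p n a r0 r1 R1 p1 a0 adec.
have p0 : 0 <= p by lra.
have pp : 0 < p by lra.
have S0 := S_ge0 r R1 p0 a0.
have Rr0 : 0 < R `^ r by apply: powR_gt0; lra.
have RrR : R `^ r <= R by apply: ler1_powR => //; lra.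
have R2 : R <= R ^+ 2 by rewrite expr2; nra.
set A := Num.sqrt (\sum_(i < n) a i ^+ 2).
set sp := Num.sqrt p.
have A0 : 0 <= A := sqrtr_ge0 _.
have sp0 : 0 <= sp := sqrtr_ge0 _.
set SH := \sum_(i < n | (i.+1)%:R <= p / R `^ r) a i.
have SH0 : 0 <= SH by apply: sumr_ge0.
have RSH : SH <= R * SH by rewrite ler_peMl //; lra.
have RSH0 : 0 <= R * SH by lra.
have spA0 : 0 <= sp * A by apply: mulr_ge0.
suff [hl hu] : BA4 r R p a <= 4 * SA4 r R p a /\ SA4 r R p a <= 4 * BA4 r R p a.
  by split => //; rewrite ler_pdivrMr // mulrC.
have csfull : forall b : 'I_n -> K, \sum_(i < n) b i ^+ 2 <= p -> \sum_(i < n) a i * b i <= A * sp.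
  move=> b hb; apply: le_trans (cs xpredT a b) _.
  apply: ler_wpM2l => //; exact: ler_wsqrtr.
have spR : p <= R ^+ 2 -> sp <= R.
  move=> h; rewrite /sp -(ger0_norm (ltW (lt_trans ltr01 R1))) -sqrtr_sqr; exact: ler_wsqrtr.
have lowA : p <= R ^+ 2 -> sp * A <= SA4 r R p a.
  move=> h.
  have := @lb_sq K n r R p 0 a xpredT r0 r1 R1 p0 (lexx 0) a0.
  rewrite mul0r mul0r addr0; apply => i _; left.
  apply: ler_pM; [exact: sqrtr_ge0 | exact: a0 | exact: spR | by apply: a_le_sqrt].
have ubR : forall t : 'I_n -> K, (forall i, `|t i| <= R) -> \sum_(i < n) gA r (t i) <= p ->
   R `^ r <= p ->
   exists b : 'I_n -> K, [/\ forall i, 0 <= b i <= 1, \sum_(i < n) b i ^+ 2 <= p &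
     \sum_(i < n) a i * t i <= \sum_(i < n) a i * b i + 3 * R * SH].
  move=> t tR tg hp.
  have [b [s [b01 b2 s0 s1 ht]]] := @ub_dec K n r R p R a t r0 r1 R1 a0 tR tg (fun i _ => tR i).
  exists b; split => //.
  have g := @greedy K n a s (R `^ r) p Rr0 hp a0 adec s0 s1.
  have E := @powR_split1 K R r (lt_trans ltr01 R1).
  have P1 : 0 <= R `^ (1 - r) := powR_ge0 _ _.
  apply: (le_trans ht); rewrite lerD2l.
  apply: le_trans (ler_wpM2l P1 g) _.
  have -> : R `^ (1 - r) * (3 * R `^ r * SH) = 3 * (R `^ (1 - r) * R `^ r) * SH by ring.
  by rewrite E.
rewrite /BA4 -/A -/sp -/SH; case: ifP => c1; [|case: ifP => c2].
- set a0s := \sum_(i < n | val i == 0%N) a i.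
  have a0s0 : 0 <= a0s by apply: sumr_ge0.
  have L2 : p `^ r^-1 * a0s <= SA4 r R p a := lb_first r0 r1 R1 p1 c1 a0.
  have L1 := lowA (le_trans c1 (le_trans RrR R2)).
  have B1 : 0 <= sp * A by apply: mulr_ge0.
  have B2 : 0 <= p `^ r^-1 * a0s by apply: mulr_ge0 => //; exact: powR_ge0.
  split; first lra.
  apply: SA4_le => // t tR tg.
  have tM : forall i, 1 < `|t i| -> `|t i| <= p `^ r^-1.
    move=> i hi.
    have gi : gA r (t i) <= p.
      apply: le_trans tg; rewrite (bigD1 i) //= lerDl; apply: sumr_ge0 => j _; exact: gA_ge0.
    move: gi; rewrite /gA ifF; last by apply/negbTE; rewrite -ltNge.
    move=> gi.
    have : (`|t i| `^ r) `^ r^-1 <= p `^ r^-1.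
      by apply: ge0_ler_powR; rewrite ?nnegrE ?powR_ge0 ?invr_ge0 //; lra.
    by rewrite -powRrM mulfV ?gt_eqF // powRr1.
  have [b [s [b01 b2 s0 s1 ht]]] := @ub_dec K n r R p (p `^ r^-1) a t r0 r1 R1 a0 tR tg tM.
  have hb := csfull b b2.
  have has : \sum_(i < n) a i * s i <= a0s * p.
    apply: (@le_trans _ _ (\sum_(i < n) a0s * s i)).
      apply: ler_sum => i _; apply: ler_wpM2r; first by case/andP: (s0 i).
      have j0lt : (0 < n)%N := leq_ltn_trans (leq0n i) (ltn_ord i).
      apply: (@le_trans _ _ (a (Ordinal j0lt))); first by apply: adec.
      rewrite /a0s (bigD1 (Ordinal j0lt)) //= lerDl; apply: sumr_ge0 => j _; exact: a0.
    by rewrite -mulr_sumr; apply: ler_wpM2l.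
  have e1 : r^-1 * (1 - r) + 1 = r^-1 by field; rewrite gt_eqF.
  have E : p `^ r^-1 `^ (1 - r) * p = p `^ r^-1.
    rewrite -powRrM -{2}(powRr1 p0) -powRD; first by rewrite e1.
    by apply/implyP => _; rewrite gt_eqF.
  have E2 : p `^ r^-1 `^ (1 - r) * (a0s * p) = p `^ r^-1 * a0s by rewrite mulrCA E mulrC.
  have := ler_wpM2l (powR_ge0 (p `^ r^-1) (1 - r)) has.
  rewrite E2 => h2.
  lra.
- move/negbT: c1; rewrite -ltNge => c1.
  have hp := ltW c1.
  have L2 : R * SH <= SA4 r R p a := lb_head r0 R1 p0 a0.
  have L1 := lowA c2.
  split; first lra.
  apply: SA4_le => // t tR tg.
  have [b [b01 b2 ht]] := ubR t tR tg hp.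
  have := csfull b b2.
  lra.
- move/negbT: c1; rewrite -ltNge => c1.
  move/negbT: c2; rewrite -ltNge => c2.
  have hp := ltW c1.
  have L2 : R * SH <= SA4 r R p a := lb_head r0 R1 p0 a0.
  have R2p : 0 < R ^+ 2 by lra.
  set x2 := p / R ^+ 2.
  have x21 : 1 <= x2 by rewrite /x2 ler_pdivlMr // mul1r ltW.
  have ex2 : x2 * R ^+ 2 = p by rewrite /x2 divfK // gt_eqF.
  have ex : p / R `^ r * R `^ r = p by rewrite divfK // gt_eqF.
  have hx2 : x2 <= p / R `^ r.
    have : R `^ r <= R ^+ 2 by lra.
    set y := p / R `^ r in ex *.
    nra.
  set AT := Num.sqrt (\sum_(i < n | x2 <= (i.+1)%:R) a i ^+ 2).
  have AT0 : 0 <= AT := sqrtr_ge0 _.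
  split.
    set M := 2 * R ^+ 2 * SH / p.
    have M0 : 0 <= M by rewrite /M divr_ge0 // !mulr_ge0 //; lra.
    have := @lb_sq K n r R p M a (fun i => x2 <= (i.+1)%:R) r0 r1 R1 p0 M0 a0.
    have -> : M * p / R = 2 * R * SH by rewrite /M; field; rewrite !gt_eqF //; lra.
    move=> h.
    have : sp * AT <= SA4 r R p a + 2 * R * SH.
      apply: h => i Ti; right.
      set cnt2 := \sum_(j < n | (j.+1)%:R <= x2) (1:K).
      have hc : x2 / 2 <= cnt2.
        case: (@count_ge K n x2 x21) => // hh.
        have : (i.+1)%:R <= n%:R :> K by rewrite ler_nat ltn_ord.
        rewrite -/cnt2 in hh; lra.
      have hs : a i * cnt2 <= SH.
        apply: (@le_trans _ _ (\sum_(j < n | (j.+1)%:R <= x2) a j)).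
          rewrite /cnt2 mulr_sumr; apply: ler_sum => j Hj; rewrite mulr1; apply: adec.
          have : (j.+1)%:R <= (i.+1)%:R :> K by apply: le_trans Hj Ti.
          by rewrite ler_nat ltnS.
        apply: sum_sub => // j Hj; exact: le_trans Hj hx2.
      have h3 : a i * (x2 / 2) <= SH by apply: le_trans hs; apply: ler_wpM2l.
      rewrite /M ler_pdivlMr // -ex2.
      have := ler_wpM2r (ltW R2p) h3.
      lra.
    lra.
  apply: SA4_le => // t tR tg.
  have [b [b01 b2 ht]] := ubR t tR tg hp.
  have hT : \sum_(i < n | x2 <= (i.+1)%:R) a i * b i <= AT * sp.
    apply: le_trans (cs _ a b) _.
    apply: ler_wpM2l => //; apply: ler_wsqrtr.
    apply: le_trans b2.
    apply: (@sum_sub K n (fun i => x2 <= (i.+1)%:R) xpredT) => // i _; exact: sqr_ge0.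
  have hN : \sum_(i < n | ~~ (x2 <= (i.+1)%:R)) a i * b i <= SH.
    apply: (@le_trans _ _ (\sum_(i < n | ~~ (x2 <= (i.+1)%:R)) a i)).
      apply: ler_sum => i _; apply: ler_piMr => //; by case/andP: (b01 i).
    apply: sum_sub => // i; rewrite -ltNge => h; apply: le_trans hx2; exact: ltW.
  have hb : \sum_(i < n) a i * b i <= AT * sp + SH.
    rewrite (bigID (fun i : 'I_n => x2 <= (i.+1)%:R)) /=; lra.
  have B1 : 0 <= sp * AT by apply: mulr_ge0.
  lra.
Qed.
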